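(* Consider the constrained nonlinear system $x(k+1)=f(x(k),u(k))$ with $f(0,0)=0$, input constraint $u\in\mathcal{U}=\{u\in\mathbb{R}^m:|u_i|\le\bar u_i,\ i=1,\dots,m\}$ and state constraint $x\in\mathcal{X}$ with $0\in\mathcal{X}$. For a horizon $N\ge1$ and stage cost $l$, let $J(x(k),U(k|k))=\sum_{i=0}^{N-1} l(x(k+i+1|k),u(k+i|k))$ with $x(k|k)=x(k)$, $x(k+i+1|k)=f(x(k+i|k),u(k+i|k))$, and let $J^*(x(k))$ be its minimum over $u(k+i|k)\in\mathcal{U}$ subject to $x(k+i+1|k)\in\mathcal{X}$, $i=0,\dots,N-1$, with optimal controls $u^*(k+i|k)$ and optimal predicted states $x^*(k+i|k)$; the MPC law applies $u(k)=u^*(k|k)$. Define $m(x)=\min_{u\in\mathcal{U}} l(f(x,u),u)$ subject to $f(x,u)\in\mathcal{X}$. Assume there exist $\alpha_1,\alpha_2\in\mathcal{K}_\infty$ with $\alpha_1(\|x\|)\le J^*(x)\le\alpha_2(\|x\|)$ and $\alpha_1(\|x\|)\le m(x)\le\alpha_2(\|x\|)$ for all $x\in\mathcal{X}$. For $\alpha>0$ let $\mathcal{X}_T(\alpha)=\{x\in\mathcal{X}: m(x)\le\alpha\}$. If the optimisation problem is feasible for an initial state $x_0\in\mathcal{X}$ and, at every time $k\ge0$, the optimal terminal state satisfies $x^*(k+N|k)\in\mathcal{X}_T(\alpha)$ with $\alpha=m(x(k))$, then the closed-loop system under the MPC algorithm is recursively feasible and stable.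
   Context: Class $\mathcal{K}$: continuous, strictly increasing functions $\phi:\mathbb{R}_+\to\mathbb{R}_+$ with $\phi(0)=0$; class $\mathcal{K}_\infty$: class $\mathcal{K}$ and radially unbounded. Stability refers to the origin of the closed-loop system. *)

(* Defs.v *)
From HB Require Import structures.
From mathcomp Require Import all_boot all_order all_algebra.
From mathcomp Require Import all_classical all_reals all_analysis.
Set Implicit Arguments. Unset Strict Implicit. Unset Printing Implicit Defensive.
Import Order.TTheory GRing.Theory Num.Theory.
Import numFieldNormedType.Exports.
Local Open Scope classical_set_scope.
Local Open Scope ring_scope.

Section MPC.
Variables (R : realType) (n m : nat).
Notation state := 'rV[R]_n.
Notation input := 'rV[R]_m.

(* class K and class K_infinity functions on R_+ (represented as R -> R,
   only values on [0, +oo) matter) *)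
Definition class_K (phi : R -> R) : Prop :=
  phi 0 = 0 /\
  {within [set r : R | 0 <= r], continuous phi} /\
  (forall a b : R, 0 <= a -> a < b -> phi a < phi b).

Definition class_Kinf (phi : R -> R) : Prop :=
  class_K phi /\ (forall M : R, exists r : R, 0 <= r /\ M < phi r).

Definition Uset (ubar : input) : set input :=
  [set u | forall i : 'I_m, `|u ord0 i| <= ubar ord0 i].

Fixpoint pred_state (f : state -> input -> state) (x : state)
  (us : nat -> input) (i : nat) : state :=
  match i with
  | 0 => x
  | i'.+1 => f (pred_state f x us i') (us i')
  end.

Definition Jcost (f : state -> input -> state) (l : state -> input -> R)
  (N : nat) (x : state) (us : nat -> input) : R :=
  \sum_(i < N) l (pred_state f x us i.+1) (us i).

Definition feasible_seq (f : state -> input -> state) (X : set state)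
  (ubar : input) (N : nat) (x : state) (us : nat -> input) : Prop :=
  forall i : nat, (i < N)%N -> Uset ubar (us i) /\ X (pred_state f x us i.+1).

Definition feasible_at f X ubar N x : Prop :=
  exists us, feasible_seq f X ubar N x us.

(* optimal value J^*(x) (extended real; +oo if infeasible) *)
Definition Jstar f l X ubar N (x : state) : \bar R :=
  ereal_inf [set (Jcost f l N x us)%:E | us in feasible_seq f X ubar N x].

Definition optimal_seq f l X ubar N (x : state) (us : nat -> input) : Prop :=
  feasible_seq f X ubar N x us /\ (Jcost f l N x us)%:E = Jstar f l X ubar N x.

Definition mstage (f : state -> input -> state) (l : state -> input -> R)
  (X : set state) (ubar : input) (x : state) : \bar R :=
  ereal_inf [set (l (f x u) u)%:E | u in [set u | Uset ubar u /\ X (f x u)]].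

Definition XT f l X ubar (alpha : \bar R) : set state :=
  [set x | X x /\ (mstage f l X ubar x <= alpha)%E].

(* closed-loop MPC trajectory from x0: xs k = x(k), uss k = optimal sequence
   U^*(k|k) computed at time k (uss k i = u^*(k+i|k)); the applied input is
   u(k) = u^*(k|k) = uss k 0.  Also encodes the theorem's hypothesis that the
   optimal terminal state x^*(k+N|k) lies in X_T(m(x(k))). *)
Definition mpc_traj f l X ubar N (x0 : state) (xs : nat -> state)
  (uss : nat -> nat -> input) : Prop :=
  xs 0%N = x0 /\
  forall k : nat, feasible_at f X ubar N (xs k) ->
    [/\ optimal_seq f l X ubar N (xs k) (uss k),
        xs k.+1 = f (xs k) (uss k 0%N) &
        XT f l X ubar (mstage f l X ubar (xs k)) (pred_state f (xs k) (uss k) N)].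

End MPC.

(* Main.v *)
Require Import Defs.
From HB Require Import structures.
From mathcomp Require Import all_boot all_order all_algebra.
From mathcomp Require Import all_classical all_reals all_analysis.
Import Order.TTheory GRing.Theory Num.Theory.
Import numFieldNormedType.Exports.
Local Open Scope classical_set_scope.
Local Open Scope ring_scope.

Lemma pred_shift (R : realType) (n m : nat)
  (f : 'rV[R]_n -> 'rV[R]_m -> 'rV[R]_n) x (us us' : nat -> 'rV[R]_m) N' :
  (forall i, (i < N')%N -> us' i = us i.+1) ->
  forall i, (i <= N')%N ->
    pred_state f (f x (us 0%N)) us' i = pred_state f x us i.+1.
Proof.
move=> H; elim=> [|i IH] Hi //=.
by rewrite IH ?H // ltnW.
Qed.

Lemma mpc_step (R : realType) (n m : nat)
  (f : 'rV[R]_n -> 'rV[R]_m -> 'rV[R]_n) (l : 'rV[R]_n -> 'rV[R]_m -> R)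
  (X : set 'rV[R]_n) (ubar : 'rV[R]_m) (N : nat) x us :
  (1 <= N)%N -> optimal_seq f l X ubar N x us ->
  XT f l X ubar (mstage f l X ubar x) (pred_state f x us N) ->
  (mstage f l X ubar x < +oo)%E ->
  feasible_at f X ubar N (f x (us 0%N)) /\
  (Jstar f l X ubar N (f x (us 0%N)) <= Jstar f l X ubar N x)%E.
Proof.
case: N => [//|N'] _ [feas Jopt] [XxT mxT] mfin.
set xT := pred_state f x us N'.+1 in XxT mxT *.
set x1 := f x (us 0%N).
pose us' u := fun i => if (i < N')%N then us i.+1 else u.
have shift u : forall i, (i <= N')%N ->
    pred_state f x1 (us' u) i = pred_state f x us i.+1.
  by apply: pred_shift => i hi; rewrite /us' hi.
have feas' u : Uset ubar u -> X (f xT u) -> feasible_seq f X ubar N'.+1 x1 (us' u).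
  move=> Uu Xu i hi; split.
  - rewrite /us'; case: ifP => hiN //.
    by case: (feas i.+1 hiN).
  - case: (ltnP i N') => hiN.
    + by rewrite (shift u i.+1 hiN); case: (feas i.+1 hiN).
    + have eiN : i = N' by apply/eqP; rewrite eqn_leq hiN andbT -ltnS.
      subst i.
      by rewrite /= (shift u N' (leqnn _)) /us' ltnn.
have cost u : Jcost f l N'.+1 x1 (us' u) =
    \sum_(i < N') l (pred_state f x us i.+2) (us i.+1) + l (f xT u) u.
  rewrite /Jcost big_ord_recr /=; congr (_ + _).
  - apply: eq_bigr => i _ /=.
    by rewrite (shift u i (ltnW (ltn_ord i))) /us' ltn_ord.
  - by rewrite (shift u N' (leqnn _)) /us' ltnn.
have costx : Jcost f l N'.+1 x us =
    l x1 (us 0%N) + \sum_(i < N') l (pred_state f x us i.+2) (us i.+1).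
  by rewrite /Jcost big_ord_recl.
have mx_le : (mstage f l X ubar x <= (l x1 (us 0%N))%:E)%E.
  apply: ereal_inf_lbound; exists (us 0%N) => //.
  by case: (feas 0%N isT).
have [y [u [Uu Xu] _] _] : exists2 y,
    [set (l (f xT u) u)%:E | u in [set u | Uset ubar u /\ X (f xT u)]] y
    & (y < +oo)%E.
  by apply: ereal_inf_lt; exact: (le_lt_trans mxT mfin).
split; first by exists (us' u); exact: feas'.
set A := \sum_(i < N') l (pred_state f x us i.+2) (us i.+1).
have : (Jstar f l X ubar N'.+1 x1 - A%:E <= mstage f l X ubar xT)%E.
  apply: le_ereal_inf_tmp => _ [v [Uv Xv] <-].
  rewrite leeBlDr // -EFinD addrC -cost.
  by apply: ereal_inf_lbound; exists (us' v) => //; exact: feas'.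
rewrite leeBlDr // => h.
rewrite -Jopt costx EFinD.
apply: (le_trans h).
rewrite leeD2r //.
exact: (le_trans mxT mx_le).
Qed.

Lemma small_arg (R : realType) (alpha2 : R -> R) (c : R) (a20 : alpha2 0 = 0) (a1e : 0 < c)
 (a2c : {within [set r : R | 0 <= r], continuous alpha2}) : exists d : R, 0 < d /\ alpha2 d < c.
Proof.
have hc : {within `[0, +oo[, continuous alpha2} by rewrite set_itvcy.
have [_ hr] := (continuous_within_itvcyP _ _).1 hc.
have H : \forall t \near 0^'+, alpha2 t < c.
  have := @cvgr_lt R R _ _ alpha2 (alpha2 0) hr c.
  by rewrite a20; apply.
have [d [d0 hd]] := filter_ex (filterI (nbhs_right_gt 0) H).
by exists d.
Qed.

Theorem theorem8 (R : realType) (n m : nat)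
  (f : 'rV[R]_n -> 'rV[R]_m -> 'rV[R]_n) (l : 'rV[R]_n -> 'rV[R]_m -> R)
  (X : set 'rV[R]_n) (ubar : 'rV[R]_m) (N : nat)
  (alpha1 alpha2 : R -> R) :
  f 0 0 = 0 ->
  X 0 ->
  (1 <= N)%N ->
  class_Kinf alpha1 -> class_Kinf alpha2 ->
  (forall x, X x ->
     ((alpha1 `|x|)%:E <= Jstar f l X ubar N x)%E /\
     (Jstar f l X ubar N x <= (alpha2 `|x|)%:E)%E) ->
  (forall x, X x ->
     ((alpha1 `|x|)%:E <= mstage f l X ubar x)%E /\
     (mstage f l X ubar x <= (alpha2 `|x|)%:E)%E) ->
  (* recursive feasibility *)
  (forall (x0 : 'rV[R]_n) (xs : nat -> 'rV[R]_n) (uss : nat -> nat -> 'rV[R]_m),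
     X x0 -> feasible_at f X ubar N x0 -> mpc_traj f l X ubar N x0 xs uss ->
     forall k : nat, feasible_at f X ubar N (xs k)) /\
  (* (Lyapunov) stability of the origin of the closed loop *)
  (forall eps : R, 0 < eps -> exists delta : R, 0 < delta /\
     forall (x0 : 'rV[R]_n) (xs : nat -> 'rV[R]_n) (uss : nat -> nat -> 'rV[R]_m),
       X x0 -> feasible_at f X ubar N x0 -> mpc_traj f l X ubar N x0 xs uss ->
       `|x0| < delta -> forall k : nat, `|xs k| < eps).

Proof.
move=> f00 X0 N1 [[a10 [_ a1m]] _] [[a20 [a2c a2m]] _] HJ Hm.
have mfin : forall x, X x -> (mstage f l X ubar x < +oo)%E.
  by move=> x Xx; exact: (le_lt_trans (Hm _ Xx).2 (ltry _)).
have inv : forall x0 xs uss, X x0 -> feasible_at f X ubar N x0 ->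
    mpc_traj f l X ubar N x0 xs uss ->
    forall k, X (xs k) /\ feasible_at f X ubar N (xs k).
  move=> x0 xs uss Xx0 F0 [e0 tr]; elim=> [|k [Xk Fk]]; first by rewrite e0.
  have [opt exs XTk] := tr k Fk.
  have [F1 _] := @mpc_step _ _ _ _ _ _ _ _ _ _ N1 opt XTk (mfin _ Xk).
  rewrite exs; split => //.
  by case: opt => feas _; case: (feas 0%N N1).
split.
  by move=> x0 xs uss Xx0 F0 tr k; case: (inv _ _ _ Xx0 F0 tr k).
move=> eps eps0.
have a1e : 0 < alpha1 eps by rewrite -a10; apply: a1m.
have [d [d0 hd]] := @small_arg R alpha2 (alpha1 eps) a20 a1e a2c.
exists d; split=> // x0 xs uss Xx0 F0 tr hx0 k.
have Jdec : forall k, (Jstar f l X ubar N (xs k) <= Jstar f l X ubar N x0)%E.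
  elim=> [|j IH]; first by rewrite tr.1.
  have [Xj Fj] := inv _ _ _ Xx0 F0 tr j.
  have [opt exs XTj] := tr.2 j Fj.
  rewrite exs; apply: le_trans IH.
  exact: (@mpc_step _ _ _ _ _ _ _ _ _ _ N1 opt XTj (mfin _ Xj)).2.
have [Xk _] := inv _ _ _ Xx0 F0 tr k.
have h1 : alpha1 `|xs k| < alpha1 eps.
  have : ((alpha1 `|xs k|)%:E <= (alpha2 `|x0|)%:E)%E.
    exact: (le_trans (HJ _ Xk).1 (le_trans (Jdec k) (HJ _ Xx0).2)).
  rewrite lee_fin => h; apply: (le_lt_trans h); apply: le_lt_trans hd.
  exact: ltW (a2m _ _ (normr_ge0 _) hx0).
rewrite ltNge; apply/negP => he; move: h1; rewrite ltNge => /negP; apply.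
rewrite le_eqVlt in he; case/predU1P: he => [<-|lt] //.
by apply: ltW; apply: a1m => //; exact: ltW.
Qed.
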